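(* Let $p(y)=\prod_{j=1}^n(y+\theta_j)$ be a real polynomial with $0\le\theta_j\le1$ for all $j$. Then the bivariate polynomial $p\big(y-xy(y+1)\big)=\sum_{k=0}^{n}p^{(k)}(y)\frac{(-xy(y+1))^k}{k!}$ is stable.
   Context: A polynomial $P\in\mathbb{C}[x,y]$ is stable if $P(x,y)\neq0$ whenever $\operatorname{Im}x>0$ and $\operatorname{Im}y>0$. *)

(* Defs.v *)
From Stdlib Require Import Reals.
Open Scope R_scope.

Definition CC : Type := (R * R)%type.
Definition Cre (z : CC) : R := fst z.
Definition Cim (z : CC) : R := snd z.
Definition RtoC (r : R) : CC := (r, 0).
Definition Czero : CC := (0, 0).
Definition Cone : CC := (1, 0).
Definition Cadd (z w : CC) : CC := (fst z + fst w, snd z + snd w).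
Definition Copp (z : CC) : CC := (- fst z, - snd z).
Definition Cmul (z w : CC) : CC :=
  (fst z * fst w - snd z * snd w, fst z * snd w + snd z * fst w).

Fixpoint Cprod (n : nat) (f : nat -> CC) : CC :=
  match n with
  | O => Cone
  | S k => Cmul (Cprod k f) (f k)
  end.

(* Evaluation of p(y) = prod_{j=1}^n (y + theta_j) at a complex point
   (theta indexed from 0 to n-1). *)
Definition p_eval (n : nat) (theta : nat -> R) (y : CC) : CC :=
  Cprod n (fun j => Cadd y (RtoC (theta j))).

Definition stable2 (P : CC -> CC -> CC) : Prop :=
  forall x y : CC, Cim x > 0 -> Cim y > 0 -> P x y <> Czero.

(* Main.v *)
Require Import Defs.
From Stdlib Require Import Reals Lra Psatz.
Open Scope R_scope.

Lemma Cmul_eq0 (z w : CC) : Cmul z w = Czero -> z = Czero \/ w = Czero.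
Proof.
  destruct z as [p q], w as [r s]; unfold Cmul, Czero; simpl.
  intros H; injection H; intros H2 H1.
  destruct (Req_dec (p*p+q*q) 0) as [E|E].
  - left. assert (p = 0) by nra. assert (q = 0) by nra. subst; reflexivity.
  - right.
    assert (Hr : (p*p+q*q)*r = 0) by (replace ((p*p+q*q)*r) with (p*(p*r-q*s)+q*(p*s+q*r)) by ring; rewrite H1, H2; ring).
    assert (Hs : (p*p+q*q)*s = 0) by (replace ((p*p+q*q)*s) with (p*(p*s+q*r)-q*(p*r-q*s)) by ring; rewrite H1, H2; ring).
    apply Rmult_integral in Hr; apply Rmult_integral in Hs.
    destruct Hr as [Hr|Hr]; [contradiction|]; destruct Hs as [Hs|Hs]; [contradiction|].
    subst; reflexivity.
Qed.

Lemma Cprod_eq0 n f : Cprod n f = Czero -> exists j, (j < n)%nat /\ f j = Czero.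
Proof.
  induction n as [|n IH]; simpl; intros H.
  - unfold Cone, Czero in H. injection H; intros; lra.
  - destruct (Cmul_eq0 _ _ H) as [H1|H1].
    + destruct (IH H1) as [j [Hj Hf]]. exists j; split; [lia|exact Hf].
    + exists n; split; [lia|exact H1].
Qed.

Lemma factor_ne0 (a b c d t : R) : b > 0 -> d > 0 -> 0 <= t <= 1 ->
  Cadd (Cadd (a,b) (Copp (Cmul (c,d) (Cmul (a,b) (Cadd (a,b) Cone))))) (RtoC t) <> Czero.
Proof.
  intros Hb Hd Ht. unfold Cadd, Copp, Cmul, RtoC, Cone, Czero; simpl.
  intros H; injection H; clear H; intros H2 H1.
  set (u := a*(a+1) - b*b). set (v := - (b*(2*a+1))).
  match type of H1 with ?E1 = 0 => match type of H2 with ?E2 = 0 =>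
  assert (Hid : E1 * v + E2 * u =
     - (d*(a*a+b*b)*((a+1)*(a+1)+b*b) + b*(t*((a+1)*(a+1)+b*b) + (1-t)*(a*a+b*b))))
  by (unfold u, v; ring) end end.
  rewrite H1, H2 in Hid.
  assert (K1 : a*a+b*b > 0) by (assert (0 <= a*a) by apply Rle_0_sqr; nra).
  assert (K2 : (a+1)*(a+1)+b*b > 0) by (assert (0 <= (a+1)*(a+1)) by apply Rle_0_sqr; nra).
  assert (K3 : d*(a*a+b*b)*((a+1)*(a+1)+b*b) > 0).
  { apply Rmult_lt_0_compat; [apply Rmult_lt_0_compat|]; lra. }
  assert (K4 : t*((a+1)*(a+1)+b*b) + (1-t)*(a*a+b*b) >= 0) by nra.
  nra.
Qed.

Theorem mainTheorem6 (n : nat) (theta : nat -> R)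
  (Htheta : forall j : nat, (j < n)%nat -> 0 <= theta j <= 1) :
  stable2 (fun x y : CC =>
    p_eval n theta (Cadd y (Copp (Cmul x (Cmul y (Cadd y Cone)))))).
Proof.
  intros [c d] [a b] Hd Hb H. unfold Cim in *; simpl in *.
  unfold p_eval in H. destruct (Cprod_eq0 _ _ H) as [j [Hj Hf]].
  exact (factor_ne0 a b c d (theta j) Hb Hd (Htheta j Hj) Hf).
Qed.
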